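(* Let $k\ge 4$, $n=2k-1$, $\eta=(\eta_1<\dots<\eta_l)\in\mathbb{D}_k\setminus\{(3,k-3)\}$, and let $Y_{2\eta^*}$ be the Young diagram whose main diagonal consists of exactly the cells $c_{1,1},\dots,c_{l+1,l+1}$ and which satisfies $h_{1,1}=2n-4$, $h_{i,i}=2\eta_{l-(i-2)}$ for $2\le i\le l+1$, and $a(c_{i,i})=l(c_{i,i})+1$ for $1\le i\le l+1$. Let $\lambda$ be the partition whose parts are the hook lengths of the first-column cells of $Y_{2\eta^*}$. Then $n-2$ is not a part of $\lambda$ (equivalently, $n-2\in\mathbb{N}_0\setminus\lambda$).
   Context: $\mathbb{D}_N$ is the set of partitions of $N$ into distinct parts, i.e. sequences $(\eta_1<\dots<\eta_l)$ of positive integers with sum $N$ and $l\ge 2$. Young diagrams are in English convention: rows top to bottom, columns left to right, $c_{i,j}$ the cell in row $i$, column $j$; arm $a(c_{i,j})$ = number of cells to its right in its row, leg $l(c_{i,j})$ = number of cells below it in its column, hook length $h_{i,j}=a+l+1$. *)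

(* Defs.v *)
From mathcomp Require Import all_boot.
Set Implicit Arguments. Unset Strict Implicit. Unset Printing Implicit Defensive.

(* A Young diagram (English convention) is represented by its sequence of row
   lengths, top to bottom: a weakly decreasing sequence of positive integers.
   Rows and columns are indexed from 1, as in the paper: cell c_{i,j}. *)
Definition young (Y : seq nat) : bool :=
  sorted geq Y && all (fun x => 0 < x) Y.

Definition row_len (Y : seq nat) (i : nat) : nat := nth 0 Y i.-1.

Definition in_diagram (Y : seq nat) (i j : nat) : bool :=
  (1 <= i <= size Y) && (1 <= j <= row_len Y i).

Definition arm (Y : seq nat) (i j : nat) : nat := row_len Y i - j.

Definition leg (Y : seq nat) (i j : nat) : nat :=
  count (fun r => j <= r) (drop i Y).

Definition hook (Y : seq nat) (i j : nat) : nat := arm Y i j + leg Y i j + 1.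

Definition distinct_partition (N : nat) (eta : seq nat) : bool :=
  sorted ltn eta && all (fun x => 0 < x) eta && (sumn eta == N) && (2 <= size eta).

Definition first_column_hooks (Y : seq nat) : seq nat :=
  [seq hook Y i 1 | i <- iota 1 (size Y)].

(* Main.v *)
Require Import Defs.
From mathcomp Require Import all_boot.
From mathcomp Require Import zify.

Lemma leg1 (Y : seq nat) i : all (fun x => 0 < x) Y -> leg Y i 1 = size Y - i.
Proof.
move=> Hp; rewrite /leg.
have : all (fun x => 0 < x) (drop i Y).
  by move: Hp; rewrite -{1}(cat_take_drop i Y) all_cat => /andP[].
by rewrite all_count => /eqP ->; rewrite size_drop.
Qed.

Theorem corollary3p18 (k n : nat) (eta Y : seq nat) :
  4 <= k -> n = 2 * k - 1 ->
  distinct_partition k eta -> eta <> [:: 3; k - 3] ->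
  young Y ->
  (* the main diagonal consists exactly of c_{1,1}, ..., c_{l+1,l+1} *)
  (forall i, 1 <= i -> in_diagram Y i i = (i <= size eta + 1)) ->
  hook Y 1 1 = 2 * n - 4 ->
  (* h_{i,i} = 2 eta_{l-(i-2)}, eta_m being nth 0 eta m.-1 *)
  (forall i, 2 <= i <= size eta + 1 ->
     hook Y i i = 2 * nth 0 eta (size eta - (i - 2)).-1) ->
  (forall i, 1 <= i <= size eta + 1 -> arm Y i i = leg Y i i + 1) ->
  n - 2 \notin first_column_hooks Y.
Proof.
move=> Hk Hn _ _ /andP[_ Hp] Hdiag H11 _ Harm.
have Hl1 := @leg1 Y 1 Hp.
have A1 : arm Y 1 1 = leg Y 1 1 + 1 by apply: Harm; rewrite leqnn /= addn1.
have Hs : size Y = n - 2.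
  move: H11; rewrite /hook A1 Hl1; lia.
suff H : forall i : nat, 0 < i -> i < 1 + size Y -> n - 2 <> hook Y i 1.
  by apply/negP => /mapP [i]; rewrite mem_iota => /andP[Hi1 Hi2] Hh; exact: (H i Hi1 Hi2 Hh).
move=> i Hi1 Hi2 Hh.
have Hpos : 0 < row_len Y i.
  rewrite /row_len; apply: (allP Hp); apply: mem_nth; move: Hi2; rewrite -(prednK Hi1) add1n ltnS. by [].
move: Hh; rewrite /hook leg1 // /arm => Hh.
have Hri : row_len Y i = i.
  move: Hh Hpos; lia.
have Hd : in_diagram Y i i by rewrite /in_diagram Hri; apply/andP; split; apply/andP; split; lia.
rewrite Hdiag // in Hd.
have := Harm i; rewrite Hi1 Hd /arm Hri subnn => /(_ isT); lia.
Qed.
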